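(* Let $\mathcal{H}=(V,E)$ be a hypergraph, and consider the mixed integer linear program with variables $w_R\in[0,1]$ for each $R\in E$ and $t_x\in\{0,1\}$ for each $x\in V$: maximize $\sum_{R\in E}w_R$ subject to (a) for all $x\in V$: $\sum_{R\in E: x\in R}w_R\le t_x+(1-t_x)L$; (b) for all $R\in E$: $w_R\le\sum_{x\in R}t_x$; (c) for all $U,W\in E$ and all $y\in U\setminus W$: $w_W\le 1+\sum_{x\in W\setminus U}t_x-t_y$. Fix values of the $t$ variables and let $S=\{x\in V: t_x=1\}$. Then the optimal objective value of the program (optimizing over $w$ with $t$ fixed) is $\tau^*(\mathsf{red}(\mathcal{H}[S]))$.
   Context: $L$ is a fixed large number (large enough that constraint (a) is vacuous when $t_x=0$, e.g. $L\ge|E|$). $\mathcal{H}[S]$ is the hypergraph with vertex set $S$ and edges $\{S\cap e: e\in E, S\cap e\ne\emptyset\}$; $\mathsf{red}$ removes every edge $e$ contained in another edge $e'\ne e$. $\tau^*$ is the value of a maximum fractional edge packing (equivalently, minimum fractional vertex cover); the empty hypergraph has $\tau^*=0$. *)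

(* Defs.v *)
From HB Require Import structures.
From mathcomp Require Import all_boot all_order all_algebra.
From mathcomp Require Import reals.
Set Implicit Arguments. Unset Strict Implicit. Unset Printing Implicit Defensive.
Import Order.TTheory GRing.Theory Num.Theory.
Local Open Scope ring_scope.

Section Defs.
Variables (R : realType) (V : finType).

Definition induced (E : {set {set V}}) (S : {set V}) : {set {set V}} :=
  [set S :&: e | e in E & S :&: e != set0].

Definition red (F : {set {set V}}) : {set {set V}} :=
  [set e in F | [forall e' in F, ~~ ((e \subset e') && (e' != e))]].

Definition is_frac_packing (X : {set V}) (F : {set {set V}}) (y : {set V} -> R) :=
  (forall e, e \in F -> 0 <= y e) /\
  (forall x, x \in X -> \sum_(e in F | x \in e) y e <= 1).

Definition is_tau_star (X : {set V}) (F : {set {set V}}) (v : R) :=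
  (exists y, is_frac_packing X F y /\ \sum_(e in F) y e = v) /\
  (forall y, is_frac_packing X F y -> \sum_(e in F) y e <= v).

Definition milp_feasible (E : {set {set V}}) (L : R) (t : V -> R)
    (w : {set V} -> R) :=
  [/\ (forall Re, Re \in E -> 0 <= w Re <= 1),
      (forall x, \sum_(Re in E | x \in Re) w Re <= t x + (1 - t x) * L),
      (forall Re, Re \in E -> w Re <= \sum_(x in Re) t x) &
      (forall U W y, U \in E -> W \in E -> y \in U :\: W ->
         w W <= 1 + \sum_(x in W :\: U) t x - t y)].

Definition milp_opt (E : {set {set V}}) (L : R) (t : V -> R) (v : R) :=
  (exists w, milp_feasible E L t w /\ \sum_(Re in E) w Re = v) /\
  (forall w, milp_feasible E L t w -> \sum_(Re in E) w Re <= v).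

End Defs.

(* Main.v *)
Require Import Defs.
From HB Require Import structures.
From mathcomp Require Import all_boot all_order all_algebra.
From mathcomp Require Import reals.
From mathcomp Require Import all_classical.
From mathcomp Require Import topology normedtype derive.
Import Order.TTheory GRing.Theory Num.Theory.
Local Open Scope ring_scope.


Section Topo.
Variables (R : realType) (I : finType).
Local Notation T := {ptws I -> R^o}.
Local Open Scope classical_set_scope.

Lemma proj_cont (i : I) : continuous (fun w : T => w i).
Proof. exact: (@proj_continuous I (fun _ => R^o) i). Qed.

Lemma sum_cont (r : seq I) (P : pred I) : continuous (fun w : T => \sum_(i <- r | P i) w i).
Proof.
have := (@continuous_big R^o I +%R 0 P add_continuous T r (fun i (w : T) => w i)).
apply => i _; exact: proj_cont.
Qed.

Lemma cont_le (g : T -> R^o) (c : R) : continuous g -> closed [set w : T | g w <= c].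
Proof.
move=> cg; have := (@preimage_closed T R^o g [set x | x <= c]).
apply; last exact: closed_le.
by move=> x _; exact: cg.
Qed.

Lemma cont_ge (g : T -> R^o) (c : R) : continuous g -> closed [set w : T | c <= g w].
Proof.
move=> cg; have := (@preimage_closed T R^o g [set x | c <= x]).
apply; last exact: closed_ge.
by move=> x _; exact: cg.
Qed.

Lemma closed_and (P Q : T -> Prop) :
  closed [set w : T | P w] -> closed [set w : T | Q w] -> closed [set w : T | P w /\ Q w].
Proof. exact: closedI. Qed.

Lemma closed_forall (J : Type) (f : J -> T -> Prop) :
  (forall j, closed [set w : T | f j w]) -> closed [set x : T | forall j, f j x].
Proof.
move=> h; have -> : [set x : T | forall j, f j x] = \bigcap_(j in setT) [set w | f j w].
  by apply/seteqP; split => x /= H j; [move=> _; exact: H | apply: H].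
exact: closed_bigI.
Qed.

Lemma closed_imp (b : Prop) (P : T -> Prop) : closed [set w : T | P w] -> closed [set x : T | b -> P x].
Proof.
move=> cA; case: (pselect b) => hb.
  by have -> : [set x : T | b -> P x] = [set w : T | P w] by apply/seteqP; split => x /=; auto.
by have -> : [set x : T | b -> P x] = setT by apply/seteqP; split => x /=.
Qed.

Lemma lp_max (A : T -> Prop) (a b : I -> R) (obj : pred I) :
  (exists w, A w) -> closed [set w : T | A w] -> (forall w, A w -> forall i, a i <= w i <= b i) ->
  exists2 c, A c & forall w, A w -> \sum_(i <- index_enum I | obj i) w i <= \sum_(i <- index_enum I | obj i) c i.
Proof.
move=> [w0 Aw0] cA box.
have cB : compact [set f : T | forall i, (`[a i, b i] : set R^o) (f i)].
  have := (@tychonoff I (fun _ => R^o) (fun i => (`[a i, b i] : set R^o)) (fun i => @segment_compact R (a i) (b i))).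
  exact.
have cA' : compact [set w : T | A w].
  apply: (subclosed_compact cA cB) => w Aw i /=.
  by rewrite in_itv /=; exact: box.
have A0 : [set w : T | A w] !=set0 by exists w0.
have [c cA1 hc] := compact_EVT_max A0 cA' (continuous_subspaceT (sum_cont (index_enum I) obj)).
exists c; first by move: cA1; rewrite inE.
by move=> w Aw; apply: hc; rewrite inE.
Qed.
End Topo.

From mathcomp Require Import all_boot all_order all_algebra.
Section Comb.
Variables (R : realType) (V : finType) (E : {set {set V}}) (L : R) (t : V -> R).
Hypothesis hL : #|E|%:R <= L.
Hypothesis ht : forall x, t x = 0 \/ t x = 1.
Local Notation S := [set x | t x == 1].
Local Notation F := (red (induced E S)).

Lemma inS x : (x \in S) = (t x == 1).
Proof. by rewrite inE. Qed.

Lemma t0 x : x \notin S -> t x = 0.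
Proof. by rewrite inS; case: (ht x) => ->; rewrite ?eqxx ?oner_eq0. Qed.

Lemma t1 x : x \in S -> t x = 1.
Proof. by rewrite inS => /eqP. Qed.

Lemma t_ge0 x : 0 <= t x.
Proof. by case: (ht x) => ->. Qed.

Lemma t_le1 x : t x <= 1.
Proof. by case: (ht x) => ->. Qed.

Lemma inducedP f : reflect (exists2 e, e \in E & (S :&: e != set0) /\ f = S :&: e) (f \in induced E S).
Proof.
apply: (iffP imsetP) => [[e]|[e eE [ne ->]]].
  by rewrite inE => /andP[eE ne] ->; exists e.
by exists e => //; rewrite inE eE.
Qed.

Lemma F_induced f : f \in F -> f \in induced E S.
Proof. by rewrite /red inE => /andP[]. Qed.

Lemma F_max f g : f \in F -> g \in induced E S -> f \subset g -> g = f.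
Proof.
rewrite /red inE => /andP[_ /forallP H] gI fg.
have := H g; rewrite gI /= fg /= => /negbNE /eqP //.
Qed.

Lemma notF_ind f : f \in induced E S -> f \notin F ->
  exists2 g, g \in induced E S & f \proper g.
Proof.
move=> fI; rewrite /red inE fI /= => /forallPn [g]; rewrite negb_imply negbK.
case/andP => gI /andP[fg gf]; exists g => //.
by rewrite properEneq eq_sym gf fg.
Qed.


Lemma ind_sub f : f \in induced E S -> f \subset S.
Proof. by case/inducedP => e _ [_ ->]; exact: subsetIl. Qed.

Lemma ind_ne f : f \in induced E S -> exists x, (x \in f) && (x \in S).
Proof.
move=> fI; have /set0Pn [x xf] : f != set0.
  by case/inducedP: fI => e _ [ne ->].
by exists x; rewrite xf (subsetP (ind_sub _ fI)).
Qed.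

Lemma ind_mem e : e \in E -> S :&: e != set0 -> S :&: e \in induced E S.
Proof. by move=> eE ne; apply/inducedP; exists e. Qed.

Lemma feas_zero w Re : milp_feasible E L t w -> Re \in E -> S :&: Re \notin F ->
  w Re = 0.
Proof.
case=> [hw ha hb hc] ReE nF.
apply/eqP; rewrite eq_le; have /andP[w0 _] := hw _ ReE; rewrite w0 andbT.
have [z|nz] := eqVneq (S :&: Re) set0.
  apply: le_trans (hb _ ReE) _; rewrite le_eqVlt; apply/orP; left; apply/eqP.
  apply: big1 => x xR; apply: t0; apply/negP => xS.
  have : x \in S :&: Re by rewrite inE xS.
  by rewrite z inE.
have [g gI] := notF_ind _ (ind_mem _ ReE nz) nF.
case/inducedP: gI => U UE [_ ->] /properP [sub [y yU yR]].
have [yS yU'] := setIP yU.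
have yUR : y \in U :\: Re.
  rewrite in_setD yU' andbT; apply/negP => yRe; move/negP: yR; apply; exact/setIP.
apply: le_trans (hc U Re y UE ReE yUR) _.
rewrite t1 // big1 ?addr0 ?subrr // => x; rewrite inE => /andP[nU xR].
apply: t0; apply/negP => xS.
have : x \in S :&: Re by rewrite inE xS.
by move/(subsetP sub)/setIP => [_ xU']; rewrite xU' in nU.
Qed.


Lemma part_sum (h : {set V} -> R) (P : pred {set V}) :
  \sum_(f in F | P f) \sum_(Re in E | S :&: Re == f) h Re =
  \sum_(Re in E | (S :&: Re \in F) && P (S :&: Re)) h Re.
Proof.
rewrite [RHS](partition_big (fun Re => S :&: Re) (fun f => (f \in F) && P f)) /=; last first.
  by move=> i /andP[_ /andP[-> ->]].
apply: eq_bigr => f /andP[fF Pf]; apply: eq_bigl => Re.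
case: eqP => [e|_]; last by rewrite !andbF.
by rewrite e fF Pf !andbT.
Qed.

Lemma part_sumT (h : {set V} -> R) :
  \sum_(f in F) \sum_(Re in E | S :&: Re == f) h Re =
  \sum_(Re in E | S :&: Re \in F) h Re.
Proof.
have e := part_sum h (fun _ => true).
rewrite (_ : \sum_(f in F) _ = \sum_(f in F | true) \sum_(Re in E | S :&: Re == f) h Re).
  by rewrite e; apply: eq_bigl => Re; rewrite /= andbT.
by apply: eq_bigl => f; rewrite andbT.
Qed.

Definition fwd (w : {set V} -> R) (f : {set V}) := \sum_(Re in E | S :&: Re == f) w Re.

Lemma fwd_ok w : milp_feasible E L t w ->
  is_frac_packing S F (fwd w) /\ \sum_(f in F) fwd w f = \sum_(Re in E) w Re.
Proof.
move=> fw; have [hw ha _ _] := fw.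
have w0 Re : Re \in E -> 0 <= w Re by move=> /hw /andP[].
split; first split.
- move=> f _; apply: sumr_ge0 => Re /andP[ReE _]; exact: w0.
- move=> x xS.
  rewrite /fwd (part_sum w (fun f => x \in f)).
  have := ha x; rewrite t1 // subrr mul0r addr0 => hax; apply: (le_trans _ hax).
  rewrite [X in _ <= X]big_mkcondr [X in X <= _]big_mkcondr /=.
  apply: ler_sum => Re ReE.
  case: ifP => [/andP[_ /setIP [_ ->]]|_] //.
  by case: ifP => // _; exact: w0.
- rewrite /fwd part_sumT; rewrite (bigID (fun Re => S :&: Re \in F) (mem E)) /=.
  rewrite [X in _ = _ + X]big1 ?addr0; last first.
    by move=> Re /andP[ReE nF]; exact: feas_zero.
  by [].
Qed.


Definition rep (f : {set V}) := odflt set0 [pick Re in E | S :&: Re == f].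

Lemma rep_spec f : f \in F -> rep f \in E /\ S :&: rep f = f.
Proof.
move=> /F_induced /inducedP [e eE [_ fe]].
rewrite /rep; case: pickP => [Re /andP[ReE /eqP <-]|] //=.
by move=> /(_ e); rewrite eE fe eqxx.
Qed.

Definition bwd (y : {set V} -> R) (Re : {set V}) :=
  if [&& Re \in E, S :&: Re \in F & rep (S :&: Re) == Re] then y (S :&: Re) else 0.

Lemma bwd_inner y f : f \in F -> \sum_(Re in E | S :&: Re == f) bwd y Re = y f.
Proof.
move=> fF; have [rE rf] := rep_spec _ fF.
rewrite (bigD1 (rep f)) /=; last by rewrite rE rf eqxx.
rewrite big1 ?addr0.
  by rewrite /bwd rE rf fF eqxx.
move=> Re /andP[/andP[ReE /eqP ef] nr]; rewrite /bwd ef.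
by rewrite eq_sym (negbTE nr) !andbF.
Qed.

Lemma bwd_notF y Re : S :&: Re \notin F -> bwd y Re = 0.
Proof. by rewrite /bwd => /negbTE ->; rewrite andbF. Qed.

Lemma bwd_sum y (P : pred {set V}) :
  \sum_(Re in E | P (S :&: Re)) bwd y Re = \sum_(f in F | P f) y f.
Proof.
rewrite (bigID (fun Re => S :&: Re \in F)) /= [X in _ + X]big1 ?addr0; last first.
  by move=> Re /andP[_ nF]; exact: bwd_notF.
transitivity (\sum_(Re in E | (S :&: Re \in F) && P (S :&: Re)) bwd y Re).
  by apply: eq_bigl => Re; rewrite -andbA [P _ && _]andbC.
rewrite -part_sum; apply: eq_bigr => f /andP[fF _]; exact: bwd_inner.
Qed.


Lemma y_le1 (y : {set V} -> R) f : is_frac_packing S F y -> f \in F -> 0 <= y f <= 1.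
Proof.
case=> y0 y1 fF; rewrite y0 //=.
have [x /andP[xf xS]] := ind_ne _ (F_induced _ fF).
apply: le_trans (y1 x xS); rewrite (bigD1 f) /=; last by rewrite fF xf.
rewrite lerDl; apply: sumr_ge0 => e /andP[/andP[eF _] _]; exact: y0.
Qed.

Lemma bwd01 (y : {set V} -> R) Re : is_frac_packing S F y -> 0 <= bwd y Re <= 1.
Proof.
move=> py; rewrite /bwd; case: ifP => [/and3P[_ fF _]|_]; first exact: y_le1.
by rewrite lexx ler01.
Qed.

Lemma bwd_ok (y : {set V} -> R) : is_frac_packing S F y ->
  milp_feasible E L t (bwd y) /\ \sum_(Re in E) bwd y Re = \sum_(f in F) y f.
Proof.
move=> py; split; last first.
  have := bwd_sum y (fun _ => true).
  rewrite (_ : \sum_(Re in E | true) bwd y Re = \sum_(Re in E) bwd y Re); last first.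
    by apply: eq_bigl => Re; rewrite andbT.
  move=> ->; by apply: eq_bigl => f; rewrite andbT.
split.
- by move=> Re _; exact: bwd01.
- move=> x; case: (ht x) => tx.
  + rewrite tx subr0 mul1r add0r; apply: le_trans hL.
    apply: (@le_trans _ _ (\sum_(Re in E) 1)); last by rewrite sumr_const.
    rewrite [X in X <= _]big_mkcondr /=; apply: ler_sum => Re _.
    have /andP[b0 b1] := bwd01 y Re py.
    by case: ifP.
  + rewrite tx subrr mul0r addr0.
    have xS : x \in S by rewrite inS tx.
    have -> : \sum_(Re in E | x \in Re) bwd y Re = \sum_(Re in E | x \in S :&: Re) bwd y Re.
      by apply: eq_bigl => Re; rewrite in_setI xS.
    rewrite (bwd_sum y (fun f => x \in f)); by case: py => _ /(_ x xS).
- move=> Re ReE; rewrite /bwd; case: ifP => [/and3P[_ fF _]|_]; last first.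
    by apply: sumr_ge0 => x _; exact: t_ge0.
  have [x /andP[xf xS]] := ind_ne _ (F_induced _ fF).
  have [_ xR] := setIP xf.
  apply: (@le_trans _ _ 1); first by have /andP[] := y_le1 y _ py fF.
  rewrite (bigD1 x) //= t1 // lerDl; apply: sumr_ge0 => z _; exact: t_ge0.
- move=> U W y0 UE WE yUW.
  have [b0 b1] := andP (bwd01 y W py).
  have s0 : 0 <= \sum_(x in W :\: U) t x by apply: sumr_ge0 => z _; exact: t_ge0.
  case: (ht y0) => ty.
    by rewrite ty subr0; apply: le_trans b1 _; rewrite lerDl.
  rewrite ty addrC addKr.
  case: (boolP [exists x in W :\: U, x \in S]) => [/existsP [x /andP[xWU xS]]|nex].
    apply: le_trans b1 _; rewrite (bigD1 x) //= t1 // lerDl.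
    by apply: sumr_ge0 => z _; exact: t_ge0.
  suff -> : bwd y W = 0 by [].
  apply: bwd_notF; apply/negP => fF.
  have [yU ynW] : y0 \in U /\ y0 \notin W by move: yUW; rewrite in_setD => /andP[].
  have y0S : y0 \in S by rewrite inS ty.
  have UI : S :&: U \in induced E S.
    by apply: ind_mem => //; apply/set0Pn; exists y0; rewrite in_setI y0S.
  have sub : S :&: W \subset S :&: U.
    apply/subsetP => z /setIP [zS zW]; rewrite in_setI zS /=.
    apply/negPn/negP => nzU; move/existsP: nex; apply; exists z.
    by rewrite in_setD nzU zW zS.
  have := F_max _ _ fF UI sub => eq.
  have : y0 \in S :&: W by rewrite -eq in_setI y0S.
  by rewrite in_setI (negbTE ynW) andbF.
Qed.


Lemma zero_out (w : {set V} -> R) : milp_feasible E L t w ->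
  milp_feasible E L t (fun e => if e \in E then w e else 0) /\
  \sum_(Re in E) (if Re \in E then w Re else 0) = \sum_(Re in E) w Re.
Proof.
case=> h1 h2 h3 h4; split; last by apply: eq_bigr => Re ->.
split.
- by move=> Re ReE; rewrite ReE; exact: h1.
- move=> x; apply: le_trans (h2 x); rewrite le_eqVlt; apply/orP; left; apply/eqP.
  by apply: eq_bigr => Re /andP[-> _].
- by move=> Re ReE; rewrite ReE; exact: h3.
- by move=> U W y UE WE yUW; rewrite WE; exact: h4.
Qed.

End Comb.

Theorem lemmaA1 (R : realType) (V : finType) (E : {set {set V}}) (L : R)
    (t : V -> R) :
  (#|E|%:R <= L) ->
  (forall x, t x = 0 \/ t x = 1) ->
  let S := [set x | t x == 1] in
  exists v : R, milp_opt E L t v /\ is_tau_star S (red (induced E S)) v.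
Proof.
move=> hL ht S; subst S.
pose A := fun w : {ptws {set V} -> R^o} =>
  (forall Re, Re \in E -> 0 <= w Re) /\ ((forall Re, Re \in E -> w Re <= 1) /\
  ((forall x, \sum_(Re in E | x \in Re) w Re <= t x + (1 - t x) * L) /\
  ((forall Re, Re \in E -> w Re <= \sum_(x in Re) t x) /\
  ((forall U, forall W, forall y, U \in E -> W \in E -> y \in U :\: W ->
      w W <= 1 + \sum_(x in W :\: U) t x - t y) /\
  ((forall e, e \notin E -> w e <= 0) /\ (forall e, e \notin E -> 0 <= w e)))))).
have AF w : A w -> milp_feasible E L t w.
  move=> [h1 [h2 [h3 [h4 [h5 _]]]]]; split => //.
  by move=> Re ReE; rewrite h1 // h2.
have FA w : milp_feasible E L t w -> (forall e, e \notin E -> w e = 0) -> A w.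
  move=> [h1 h2 h3 h4] h0; split; first by move=> Re /h1 /andP[].
  split; first by move=> Re /h1 /andP[].
  do 3 (split => //).
  by split => e /h0 ->.
have w0F : milp_feasible E L t (fun _ => 0).
  split.
  - by move=> Re _; rewrite lexx ler01.
  - move=> x; rewrite big1 //; case: (ht x) => ->.
      by rewrite subr0 mul1r add0r; apply: le_trans hL.
    by rewrite subrr mul0r addr0.
  - by move=> Re _; apply: sumr_ge0 => x _; case: (ht x) => ->.
  - move=> U W y _ _ _; have s0 : 0 <= \sum_(x in W :\: U) t x.
      by apply: sumr_ge0 => x _; case: (ht x) => ->.
    by case: (ht y) => ->; rewrite ?subr0 ?(addrC 1) ?addrK // addr_ge0.
have [c Ac cmax] : exists2 c, A c & forall w, A w ->
    \sum_(Re in E) w Re <= \sum_(Re in E) c Re.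
  apply: (@lp_max R {set V} A (fun _ => 0) (fun e => if e \in E then 1 else 0) (mem E)).
  - by exists (fun _ => 0); apply: FA.
  - apply: closed_and; first by apply: closed_forall => Re; apply: closed_imp; apply: cont_ge; exact: proj_cont.
    apply: closed_and; first by apply: closed_forall => Re; apply: closed_imp; apply: cont_le; exact: proj_cont.
    apply: closed_and; first by apply: closed_forall => x; apply: cont_le; exact: sum_cont.
    apply: closed_and; first by apply: closed_forall => Re; apply: closed_imp; apply: cont_le; exact: proj_cont.
    apply: closed_and.
      apply: closed_forall => U; apply: closed_forall => W; apply: closed_forall => y.
      do 3 apply: closed_imp; apply: cont_le; exact: proj_cont.
    apply: closed_and; first by apply: closed_forall => e; apply: closed_imp; apply: cont_le; exact: proj_cont.
    by apply: closed_forall => e; apply: closed_imp; apply: cont_ge; exact: proj_cont.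
  - move=> w [h1 [h2 [_ [_ [_ [h6 h7]]]]]] e; case: ifP => eE.
      by rewrite h1 ?h2.
    by rewrite h7 ?h6 // eE.
have bound w : milp_feasible E L t w -> \sum_(Re in E) w Re <= \sum_(Re in E) c Re.
  move=> fw; have [fw' <-] := @zero_out _ _ _ _ _ _ fw.
  apply: cmax; apply: FA => // e /negbTE ->; by [].
exists (\sum_(Re in E) c Re); split.
  by split; [exists c; split => //; exact: AF|].
split.
  have [pk eq] := @fwd_ok _ _ _ _ _ ht _ (AF _ Ac).
  by exists (@fwd _ _ E t c).
move=> y py; have [fy <-] := @bwd_ok _ _ _ _ _ hL ht _ py.
exact: bound.
Qed.
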